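(* For every $n\ge1$, the number of matrices $A\in\mathbb{R}^{n\times n}$ with all rows of Euclidean norm $1$ that maximize $\beta(A)$ over all such matrices is at most $2^{n\cdot 2^n}$.
   Context: For $A\in\mathbb{R}^{m\times n}$, $\beta(A)=\frac{1}{2^n}\sum_{x\in\{-1,1\}^n}\|Ax\|_\infty$. *)

(* Defs.v *)
From HB Require Import structures.
From mathcomp Require Import all_boot all_order all_algebra.
From mathcomp Require Import reals.
Set Implicit Arguments. Unset Strict Implicit. Unset Printing Implicit Defensive.
Import Order.TTheory GRing.Theory Num.Theory.
Local Open Scope ring_scope.

(* The sign vector x in {-1,1}^n encoded by f : {ffun 'I_n -> bool}
   (true |-> 1, false |-> -1); this is a bijection onto {-1,1}^n. *)
Definition signvec (R : realType) (n : nat) (f : {ffun 'I_n -> bool}) : 'cV[R]_n :=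
  \col_i (if f i then 1 else -1).

Definition infnorm (R : realType) (m : nat) (v : 'cV[R]_m) : R :=
  \big[Num.max/0]_(i < m) `|v i 0|.

Definition beta (R : realType) (m n : nat) (A : 'M[R]_(m, n)) : R :=
  (2 ^+ n)^-1 * \sum_(f : {ffun 'I_n -> bool}) infnorm (A *m signvec R f).

Definition unit_rows (R : realType) (m n : nat) (A : 'M[R]_(m, n)) : Prop :=
  forall i : 'I_m, Num.sqrt (\sum_(j < n) A i j ^+ 2) = 1.

Definition beta_maximizer (R : realType) (n : nat) (A : 'M[R]_n) : Prop :=
  unit_rows A /\ forall B : 'M[R]_n, unit_rows B -> beta B <= beta A.

(* Main.v *)
Require Import Defs.
From HB Require Import structures.
From mathcomp Require Import all_boot all_order all_algebra.
From mathcomp Require Import reals.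
From mathcomp Require Import ring lra.
Import Order.TTheory GRing.Theory Num.Theory.
Set Implicit Arguments. Unset Strict Implicit. Unset Printing Implicit Defensive.
Local Open Scope ring_scope.

Definition sv (R : realType) n (x : {ffun 'I_n -> bool}) (j : 'I_n) : R :=
  if x j then 1 else -1.
Definition dot (R : realType) n (b : 'I_n -> R) (x : {ffun 'I_n -> bool}) : R :=
  \sum_j b j * sv R x j.
Definition mrest (R : realType) n (M : 'M[R]_n) (i : 'I_n) x : R :=
  \big[Num.max/0]_(k < n | k != i) `|dot (M k) x|.

Lemma bm_ge0 (R : realType) (I : Type) (r : seq I) (P : pred I) (F : I -> R) :
  0 <= \big[Num.max/0]_(k <- r | P k) F k.
Proof.
elim: r => [|a r IH]; rewrite ?big_nil ?big_cons //.
by case: (P a) => //; rewrite le_max IH orbT.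
Qed.

Lemma bm_ub (R : realType) (I : eqType) (r : seq I) (P : pred I) (F : I -> R) k :
  k \in r -> P k -> F k <= \big[Num.max/0]_(k <- r | P k) F k.
Proof.
elim: r => [//|a r IH]; rewrite inE big_cons => /orP [/eqP-> Pk| kr Pk].
  by rewrite Pk le_max lexx.
by case: (P a); rewrite ?le_max IH ?orbT.
Qed.

Lemma bm_le (R : realType) (I : Type) (r : seq I) (P : pred I) (F : I -> R) c :
  0 <= c -> (forall k, P k -> F k <= c) -> \big[Num.max/0]_(k <- r | P k) F k <= c.
Proof.
move=> c0 H; elim: r => [|a r IH]; rewrite ?big_nil ?big_cons //.
by case: ifP => // Pa; rewrite ge_max IH H.
Qed.

Lemma bm_lt (R : realType) (I : Type) (r : seq I) (P : pred I) (F : I -> R) c :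
  0 < c -> (forall k, P k -> F k < c) -> \big[Num.max/0]_(k <- r | P k) F k < c.
Proof.
move=> c0 H; elim: r => [|a r IH]; rewrite ?big_nil ?big_cons //.
by case: ifP => // Pa; rewrite gt_max IH H.
Qed.

Lemma mulsv (R : realType) n (M : 'M[R]_n) x k :
  (M *m signvec R x) k 0 = dot (M k) x.
Proof. by rewrite !mxE; apply: eq_bigr => j _; rewrite mxE. Qed.

Lemma infnorm_split (R : realType) n (M : 'M[R]_n) i x :
  infnorm (M *m signvec R x) = Num.max `|dot (M i) x| (mrest M i x).
Proof.
apply/le_anti/andP; split.
  apply: bm_le; first by rewrite le_max normr_ge0.
  move=> k _; rewrite mulsv le_max; case: (eqVneq k i) => [->|ki].
    by rewrite lexx.
  by rewrite (bm_ub _ (mem_index_enum k)) ?orbT.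
rewrite ge_max; apply/andP; split.
  by rewrite -mulsv; apply: (bm_ub _ (mem_index_enum i)).
apply: bm_le; first exact: bm_ge0.
by move=> k _; rewrite -mulsv; apply: (bm_ub _ (mem_index_enum k)).
Qed.

Definition repl (R : realType) n (A : 'M[R]_n) (i : 'I_n) (b : 'I_n -> R) : 'M[R]_n :=
  \matrix_(k, j) if k == i then b j else A k j.

Lemma dot_repl (R : realType) n (A : 'M[R]_n) i b x : dot (repl A i b i) x = dot b x.
Proof. by apply: eq_bigr => j _; rewrite mxE eqxx. Qed.

Lemma mrest_repl (R : realType) n (A : 'M[R]_n) i b x : mrest (repl A i b) i x = mrest A i x.
Proof.
apply: eq_bigr => k ki; congr `|_|; apply: eq_bigr => j _.
by rewrite mxE (negbTE ki).
Qed.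

Lemma unit_repl (R : realType) n (A : 'M[R]_n) i b :
  unit_rows A -> \sum_j b j ^+ 2 = 1 -> unit_rows (repl A i b).
Proof.
move=> uA hb k; case: (eqVneq k i) => [->|ki].
  by rewrite -[RHS](sqrtr1 R) -hb; congr Num.sqrt; apply: eq_bigr => j _; rewrite mxE eqxx.
by rewrite -(uA k); congr Num.sqrt; apply: eq_bigr => j _; rewrite mxE (negbTE ki).
Qed.

Lemma beta_split (R : realType) n (M : 'M[R]_n) i :
  beta M = (2 ^+ n)^-1 * \sum_x Num.max `|dot (M i) x| (mrest M i x).
Proof. by rewrite /beta; congr (_ * _); apply: eq_bigr => x _; rewrite (infnorm_split _ i). Qed.

Lemma max_ineq (R : realType) n (A : 'M[R]_n) i (b : 'I_n -> R) :
  beta_maximizer A -> \sum_j b j ^+ 2 = 1 ->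
  \sum_x Num.max `|dot b x| (mrest A i x) <= \sum_x Num.max `|dot (A i) x| (mrest A i x).
Proof.
case=> uA H hb; have := H _ (unit_repl i uA hb).
rewrite (beta_split (repl A i b) i) (beta_split A i).
under eq_bigr do rewrite dot_repl mrest_repl.
by rewrite ler_pM2l // invr_gt0 exprn_gt0.
Qed.

Definition negf n (x : {ffun 'I_n -> bool}) : {ffun 'I_n -> bool} := [ffun j => ~~ x j].

Lemma negfK n : involutive (@negf n).
Proof. by move=> x; apply/ffunP => j; rewrite !ffunE negbK. Qed.

Lemma negf_inj n : injective (@negf n).
Proof. exact: inv_inj (@negfK n). Qed.

Lemma dot_neg (R : realType) n (b : 'I_n -> R) x : dot b (negf x) = - dot b x.
Proof.
rewrite /dot -sumrN; apply: eq_bigr => j _; rewrite /sv ffunE.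
by case: (x j) => /=; rewrite ?mulrN ?mulrN1 ?opprK ?mulr1.
Qed.

Lemma mrest_neg (R : realType) n (A : 'M[R]_n) i x : mrest A i (negf x) = mrest A i x.
Proof. by apply: eq_bigr => k _; rewrite dot_neg normrN. Qed.

Lemma small_of_notT (R : realType) (d m : R) :
  0 <= m -> ~~ ((0 < d) && (m <= d)) -> ~~ ((0 < - d) && (m <= - d)) -> `|d| <= m.
Proof.
move=> m0; rewrite ler_norml !negb_and -!ltNge -!leNgt.
by move=> /orP[h1|h1] /orP[h2|h2]; apply/andP; split; lra.
Qed.

Lemma subgrad (R : realType) n (da db m : {ffun 'I_n -> bool} -> R) :
  (forall x, 0 <= m x) -> (forall x, m (negf x) = m x) ->
  (forall x, da (negf x) = - da x) -> (forall x, db (negf x) = - db x) ->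
  \sum_x Num.max `|da x| (m x)
    + 2 * \sum_(x | (0 < da x) && (m x <= da x)) (db x - da x)
  <= \sum_x Num.max `|db x| (m x).
Proof.
move=> m0 mN aN bN.
set T := fun x => (0 < da x) && (m x <= da x).
set G := fun x => if T x then db x - da x else 0.
have pt x : Num.max `|da x| (m x) + (G x + G (negf x)) <= Num.max `|db x| (m x).
  rewrite /G /T aN bN mN.
  case: ifP => [/andP [h1 h2]|hT].
    have -> : (0 < - da x) && (m x <= - da x) = false.
      by apply/negbTE/negP => /andP [h3 _]; lra.
    have -> : Num.max `|da x| (m x) = da x.
      by rewrite ger0_norm ?ltW //; apply/max_idPl.
    rewrite addr0 addrC subrK; apply: le_trans (ler_norm _) _.
    by rewrite le_max lexx.
  case: ifP => [/andP [h1 h2]|hT2].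
    have -> : Num.max `|da x| (m x) = - da x.
      by rewrite ltr0_norm -?oppr_gt0 //; apply/max_idPl.
    have : - db x <= `|db x| by rewrite -normrN ler_norm.
    have : `|db x| <= Num.max `|db x| (m x) by rewrite le_max lexx.
    move=> h3 h4; lra.
  have hs : `|da x| <= m x by apply: small_of_notT; rewrite ?hT ?hT2.
  by rewrite (max_idPr hs) !addr0 le_max lexx orbT.
have := @ler_sum _ _ (index_enum _) xpredT _ _ (fun x _ => pt x).
rewrite big_split /= big_split /=.
have -> : \sum_x G (negf x) = \sum_x G x by rewrite [RHS](reindex_inj (@negf_inj n)).
have -> : \sum_(x | T x) (db x - da x) = \sum_x G x by rewrite big_mkcond.
by move=> h; apply: le_trans h; rewrite mulr2n ?mulrDl ?mul1r le_refl.
Qed.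

Definition flip n (j : 'I_n) (x : {ffun 'I_n -> bool}) : {ffun 'I_n -> bool} :=
  [ffun k => if k == j then ~~ x k else x k].

Lemma flipK n j : involutive (@flip n j).
Proof. by move=> x; apply/ffunP => k; rewrite !ffunE; case: eqP => // _; rewrite negbK. Qed.

Lemma sv2 (R : realType) n x (j : 'I_n) : sv R x j * sv R x j = 1.
Proof. by rewrite /sv; case: (x j); rewrite ?mulr1 ?mulrNN ?mulr1. Qed.

Lemma orth (R : realType) n (j l : 'I_n) :
  \sum_x sv R x j * sv R x l = if j == l then #|{ffun 'I_n -> bool}|%:R else 0.
Proof.
case: eqP => [<-|/eqP jl].
  by under eq_bigr do rewrite sv2; rewrite sumr_const.
set S := \sum_x _.
have : S = - S.
  rewrite /S [LHS](reindex_inj (inv_inj (@flipK n j))) -sumrN.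
  have lj : (l == j) = false by rewrite eq_sym; apply/negbTE.
  apply: eq_bigr => x _; rewrite /sv !ffunE eqxx lj.
  by case: (x j); case: (x l) => /=; rewrite ?mulr1 ?mul1r ?mulrN1 ?mulN1r ?opprK.
move=> h; lra.
Qed.

Lemma parseval (R : realType) n (a : 'I_n -> R) :
  \sum_x dot a x ^+ 2 = #|{ffun 'I_n -> bool}|%:R * \sum_j a j ^+ 2.
Proof.
have e x : dot a x ^+ 2 = \sum_j \sum_l (a j * a l) * (sv R x j * sv R x l).
  rewrite expr2 /dot mulr_suml; apply: eq_bigr => j _; rewrite mulr_sumr.
  by apply: eq_bigr => l _; rewrite mulrACA.
under eq_bigr do rewrite e.
rewrite exchange_big /= mulr_sumr; apply: eq_bigr => j _.
have f l : \sum_x a j * a l * (sv R x j * sv R x l)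
   = a j * a l * (\sum_x sv R x j * sv R x l) by rewrite mulr_sumr.
rewrite exchange_big /= (bigD1 j) //= [X in _ + X = _]big1 ?addr0.
  by rewrite f orth eqxx mulrC expr2.
move=> l lj; rewrite f orth.
by rewrite eq_sym (negbTE lj) mulr0.
Qed.

Definition Tc (R : realType) n (A : 'M[R]_n) i : {ffun {ffun 'I_n -> bool} -> bool} :=
  [ffun x => (0 < dot (A i) x) && (mrest A i x <= dot (A i) x)].
Definition uvec (R : realType) n (T : {ffun {ffun 'I_n -> bool} -> bool}) (j : 'I_n) : R :=
  \sum_(x | T x) sv R x j.
Definition rowT (R : realType) n (T : {ffun {ffun 'I_n -> bool} -> bool}) (j : 'I_n) : R :=
  uvec R T j / Num.sqrt (\sum_l uvec R T l ^+ 2).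

Lemma ineq_b (R : realType) n (A : 'M[R]_n) i (b : 'I_n -> R) :
  beta_maximizer A -> \sum_j b j ^+ 2 = 1 ->
  \sum_(x | Tc A i x) (dot b x - dot (A i) x) <= 0.
Proof.
move=> hA hb.
have h1 := @subgrad R n (dot (A i)) (dot b) (mrest A i)
  (fun x => bm_ge0 _ _ _) (mrest_neg A i) (dot_neg (A i)) (dot_neg b).
have h2 := max_ineq i hA hb.
have e : \sum_(x | Tc A i x) (dot b x - dot (A i) x) =
   \sum_(x | (0 < dot (A i) x) && (mrest A i x <= dot (A i) x)) (dot b x - dot (A i) x).
  by apply: eq_bigl => x; rewrite ffunE.
rewrite e; lra.
Qed.

Lemma ip_eq (R : realType) n (T : {ffun {ffun 'I_n -> bool} -> bool}) (b : 'I_n -> R) :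
  \sum_(x | T x) dot b x = \sum_j b j * uvec R T j.
Proof.
rewrite /dot exchange_big; apply: eq_bigr => j _.
by rewrite /uvec mulr_sumr.
Qed.

Lemma row_norm1 (R : realType) n (A : 'M[R]_n) i :
  unit_rows A -> \sum_j A i j ^+ 2 = 1.
Proof.
move=> uA; have h := uA i.
have S0 : 0 <= \sum_j A i j ^+ 2 by apply: sumr_ge0 => j _; apply: sqr_ge0.
by rewrite -(sqr_sqrtr S0) h expr1n.
Qed.

Lemma T_nonempty (R : realType) n (A : 'M[R]_n) i :
  beta_maximizer A -> exists x, Tc A i x.
Proof.
move=> hA; case: (pickP (Tc A i)) => [x Hx | H]; first by exists x.
exfalso.
have uA := hA.1.
have small x : `|dot (A i) x| <= mrest A i x.
  apply: small_of_notT; first exact: bm_ge0.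
    by have := H x; rewrite ffunE => ->.
  by have := H (negf x); rewrite ffunE dot_neg mrest_neg => ->.
have n0 : (0 < n)%N := leq_ltn_trans (leq0n _) (ltn_ord i).
have nR : 0 < n%:R :> R by rewrite ltr0n.
set c : R := (Num.sqrt n%:R)^-1.
have c0 : 0 < c by rewrite invr_gt0 sqrtr_gt0.
have cn : c ^+ 2 * n%:R = 1.
  rewrite /c exprVn sqr_sqrtr ?ltW // mulVf //; exact: lt0r_neq0.
set N := #|{ffun 'I_n -> bool}|.
have N0 : 0 < N%:R :> R.
  by rewrite ltr0n /N card_ffun card_bool expn_gt0.
case: (pickP (fun x => mrest A i x < n%:R * c)) => [x0 Hx0 | H2].
  pose b j := c * sv R x0 j.
  have hb : \sum_j b j ^+ 2 = 1.
    have e j : b j ^+ 2 = c ^+ 2 by rewrite /b exprMn [X in _ * X]expr2 sv2 mulr1.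
    under eq_bigr do rewrite e.
    by rewrite sumr_const card_ord -cn mulr_natr.
  have := max_ineq i hA hb.
  have db0 : dot b x0 = n%:R * c.
    have e j : b j * sv R x0 j = c by rewrite /b -mulrA sv2 mulr1.
    rewrite /dot; under eq_bigr do rewrite e.
    by rewrite sumr_const card_ord mulr_natl.
  rewrite (bigD1 x0) //= [X in _ <= X](bigD1 x0) //= (max_idPr (small x0)).
  have hr : \sum_(x | x != x0) Num.max `|dot (A i) x| (mrest A i x)
         <= \sum_(x | x != x0) Num.max `|dot b x| (mrest A i x).
    apply: ler_sum => x _; rewrite (max_idPr (small x)) le_max lexx orbT //.
  have hm : n%:R * c <= Num.max `|dot b x0| (mrest A i x0).
    by rewrite le_max db0 ger0_norm ?lexx // mulr_ge0 // ?ltW.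
  move=> h; lra.
have big x : n%:R <= \sum_(k | k != i) dot (A k) x ^+ 2.
  have hx : n%:R * c <= mrest A i x by have := H2 x; rewrite /= ltNge => /negbFE.
  case: (pickP (fun k => (k != i) && (n%:R * c <= `|dot (A k) x|))) => [k /andP [ki hk] | H3].
    rewrite (bigD1 k) //=.
    have r0 : 0 <= \sum_(k0 | (k0 != i) && (k0 != k)) dot (A k0) x ^+ 2.
      by apply: sumr_ge0 => l _; apply: sqr_ge0.
    have : n%:R <= dot (A k) x ^+ 2.
      rewrite -real_normK ?num_real //.
      have e : n%:R = (n%:R * c) ^+ 2 :> R.
        by rewrite exprMn expr2 -mulrA [_ * c ^+ 2]mulrC cn mulr1.
      have nc0 : 0 <= n%:R * c by rewrite mulr_ge0 // ltW.
      rewrite e; nra.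
    move=> h; lra.
  exfalso.
  have : mrest A i x < n%:R * c.
    apply: bm_lt; first by rewrite mulr_gt0.
    by move=> k ki; have := H3 k; rewrite ki /= => /negbT; rewrite -ltNge.
  move=> h; lra.
have hs := @ler_sum _ _ (index_enum _) xpredT _ _ (fun x _ => big x).
rewrite exchange_big /= in hs.
have e2 : \sum_(k | k != i) \sum_x dot (A k) x ^+ 2 = \sum_(k | k != i) N%:R.
  by apply: eq_bigr => k _; rewrite parseval row_norm1 // mulr1.
rewrite e2 in hs.
have e3 : \sum_(k < n) (N%:R : R) = N%:R + \sum_(k | k != i) N%:R by rewrite (bigD1 i).
have e3' : \sum_(k < n) (N%:R : R) = n%:R * N%:R by rewrite sumr_const card_ord mulr_natl.
have e5 : \sum_(x : {ffun 'I_n -> bool}) (n%:R : R) = n%:R * N%:R by rewrite sumr_const mulr_natr.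
rewrite e5 in hs; lra.
Qed.

Lemma row_eq (R : realType) n (A : 'M[R]_n) i j :
  beta_maximizer A -> A i j = rowT R (Tc A i) j.
Proof.
move=> hA; have uA := hA.1.
have [x0 Hx0] := T_nonempty i hA.
set T := Tc A i.
set u := uvec R T.
set a := A i.
have ipa : 0 < \sum_j a j * u j.
  rewrite -ip_eq (bigD1 x0) //=.
  have : 0 < dot a x0 by move: Hx0; rewrite /T ffunE => /andP [].
  have : 0 <= \sum_(x | T x && (x != x0)) dot a x.
    apply: sumr_ge0 => x /andP [Tx _]; move: Tx; rewrite /T ffunE => /andP [h _].
    exact: ltW.
  move=> h1 h2; lra.
set Nu := \sum_j u j ^+ 2.
have Nu0 : 0 < Nu.
  rewrite lt_def; apply/andP; split; last by apply: sumr_ge0 => k _; apply: sqr_ge0.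
  apply/negP => /eqP Nz.
  have : Nu == 0 by rewrite Nz.
  rewrite psumr_eq0; last by move=> k _; apply: sqr_ge0.
  move=> /allP hz.
  have : \sum_j a j * u j = 0.
    apply: big1 => k _.
    have := hz k (mem_index_enum k); rewrite /= sqrf_eq0 => /eqP ->.
    by rewrite mulr0.
  move=> h; lra.
set r := Num.sqrt Nu.
have r0 : 0 < r by rewrite sqrtr_gt0.
have r2 : r ^+ 2 = Nu by rewrite sqr_sqrtr // ltW.
pose b k := u k / r.
have hb : \sum_k b k ^+ 2 = 1.
  under eq_bigr do rewrite /b expr_div_n.
  by rewrite -mulr_suml r2 -/Nu mulfV // (lt0r_neq0 Nu0).
have hi := ineq_b i hA hb.
rewrite sumrB !ip_eq -/T -/u in hi.
have ebu : \sum_k b k * u k = r.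
  under eq_bigr do rewrite /b mulrAC -expr2.
  by rewrite -mulr_suml -/Nu -r2 expr2 (mulfK (lt0r_neq0 r0)).
have ha1 : \sum_k a k ^+ 2 = 1 by apply: row_norm1.
have D : \sum_k (a k - b k) ^+ 2 = 2 - 2 * ((\sum_k a k * u k) / r).
  have ex k : (a k - b k) ^+ 2 = a k ^+ 2 + b k ^+ 2 - 2 * ((a k * u k) / r).
    by rewrite /b; ring.
  under eq_bigr do rewrite ex.
  rewrite sumrB big_split /= ha1 hb -mulr_sumr -mulr_suml.
  by rewrite (_ : 1 + 1 = 2 :> R) //.
have q : 1 <= (\sum_k a k * u k) / r.
  by rewrite ler_pdivlMr // mul1r; lra.
have D0 : \sum_k (a k - b k) ^+ 2 == 0.
  rewrite eq_le sumr_ge0 ?andbT => [|k _]; last exact: sqr_ge0.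
  rewrite D; lra.
move: D0; rewrite psumr_eq0; last by move=> k _; apply: sqr_ge0.
move=> /allP /(_ j (mem_index_enum j)) /=; rewrite sqrf_eq0 subr_eq0 => /eqP ->.
by [].
Qed.

Definition code (R : realType) n (A : 'M[R]_n) :
  {ffun 'I_n -> {ffun {ffun 'I_n -> bool} -> bool}} := [ffun i => Tc A i].

Theorem corollary3 (R : realType) (n : nat) (hn : (1 <= n)%N)
  (s : seq 'M[R]_n) :
  uniq s -> (forall A, A \in s -> beta_maximizer A) ->
  (size s <= 2 ^ (n * 2 ^ n))%N.
Proof.
move=> us hs.
have inj : {in s &, injective (@code R n)}.
  move=> A B hA hB e; apply/matrixP => i j.
  rewrite (row_eq i j (hs A hA)) (row_eq i j (hs B hB)).
  by move/ffunP: e => /(_ i); rewrite /code !ffunE => ->.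
rewrite -(size_map (@code R n)).
have -> : (2 ^ (n * 2 ^ n))%N = #|{ffun 'I_n -> {ffun {ffun 'I_n -> bool} -> bool}}|.
  by rewrite !card_ffun !card_bool card_ord -expnM mulnC.
rewrite cardE; apply: uniq_leq_size.
  by rewrite map_inj_in_uniq.
by move=> y _; rewrite mem_enum.
Qed.
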